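(* Let $p$ be a prime and $G$ a finite abelian $p$-group. Then $G$ is a $2$-closed group if and only if $G$ is cyclic.
   Context: Permutations act on the right. For $X\leq{\rm Sym}(\Omega)$, the $2$-closure of $X$ on $\Omega$ is $X^{(2),\Omega}=\{\theta\in{\rm Sym}(\Omega)\mid \forall \alpha,\beta\in\Omega\ \exists g\in X:\ \alpha^\theta=\alpha^g,\ \beta^\theta=\beta^g\}$. An abstract group $G$ is called a $2$-closed group if $H=H^{(2),\Omega}$ for every set $\Omega$ and every subgroup $H\leq{\rm Sym}(\Omega)$ with $H\cong G$. *)

(* Defs.v *)
From mathcomp Require Import all_boot all_fingroup all_solvable.
Set Implicit Arguments.
Unset Strict Implicit.
Unset Printing Implicit Defensive.
Local Open Scope group_scope.

(* Permutations act on the right: alpha^(g h) = (alpha^g)^h.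
   A permutation group on an arbitrary set (type) Omega is a predicate
   H : (Omega -> Omega) -> Prop on maps Omega -> Omega. *)

Definition perm_group_isomorphic_to (gT : finGroupType) (G : {group gT})
    (Omega : Type) (H : (Omega -> Omega) -> Prop) : Prop :=
  exists f : gT -> (Omega -> Omega),
    [/\ (forall g, g \in G -> bijective (f g)),
        (forall g h, g \in G -> h \in G -> f (g * h) = f h \o f g),
        (forall g h, g \in G -> h \in G -> f g = f h -> g = h) &
        (forall theta, H theta <-> exists2 g, g \in G & theta = f g)].

Definition two_closure (Omega : Type) (X : (Omega -> Omega) -> Prop)
    (theta : Omega -> Omega) : Prop :=
  bijective theta /\
  forall alpha beta : Omega,
    exists g, X g /\ theta alpha = g alpha /\ theta beta = g beta.

Definition two_closed_group (gT : finGroupType) (G : {group gT}) : Prop :=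
  forall (Omega : Type) (H : (Omega -> Omega) -> Prop),
    perm_group_isomorphic_to G H ->
    forall theta, H theta <-> two_closure H theta.

(* Main.v *)
Require Import Defs.
From mathcomp Require Import all_boot all_fingroup all_solvable.
From Stdlib Require Import ClassicalEpsilon FunctionalExtensionality Classical.
Set Implicit Arguments. Unset Strict Implicit.
Local Open Scope group_scope.

Definition pb (P : Prop) : bool := if excluded_middle_informative P then true else false.
Lemma pbP P : reflect P (pb P).
Proof. by rewrite /pb; case: excluded_middle_informative => h; constructor. Qed.

Section Cyc.
Variables (gT : finGroupType) (G : {group gT}) (p : nat) (Omega : Type).
Variable f : gT -> Omega -> Omega.
Hypothesis fbij : forall g, g \in G -> bijective (f g).
Hypothesis fM : forall g h, g \in G -> h \in G -> f (g * h) = f h \o f g.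
Hypothesis finj : forall g h, g \in G -> h \in G -> f g = f h -> g = h.

Lemma f1 x : f 1 x = x.
Proof.
have := fM (group1 G) (group1 G); rewrite mulg1 => e.
have [g gK Kg] := fbij (group1 G).
have := congr1 (fun F => F x) e => /= e2.
by have := congr1 g e2; rewrite !gK => ->.
Qed.

Definition S beta := [set g in G | pb (f g beta = beta)].

Lemma S_group beta : group_set (S beta).
Proof.
apply/group_setP; split.
  by rewrite inE group1 /=; apply/pbP; apply: f1.
move=> x y; rewrite !inE => /andP[xG /pbP fx] /andP[yG /pbP fy].
rewrite groupM //=; apply/pbP; by rewrite fM //= fx fy.
Qed.

Definition Sg beta := Group (S_group beta).

Lemma SgG beta : Sg beta \subset G.
Proof. by apply/subsetP=> x; rewrite inE => /andP[]. Qed.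

Hypothesis pr : prime p.
Hypothesis pG : p.-group G.
Hypothesis cG : cyclic G.

Lemma reg_point : (Omega -> False) \/
  exists alpha, forall g h, g \in G -> h \in G -> f g alpha = f h alpha -> g = h.
Proof.
case: (classic (inhabited Omega)) => [[b0]|ne]; last by left => w; apply: ne.
right.
pose P n := pb (exists beta, #|Sg beta| = n).
have exP : exists n, P n by exists #|Sg b0|; apply/pbP; exists b0.
case: (ex_minnP exP) => m /pbP [alpha ea] minm.
exists alpha.
have sub : forall beta, Sg alpha \subset Sg beta.
  move=> beta; rewrite -(cardSg_cyclic cG (SgG alpha) (SgG beta)).
  have le : #|Sg alpha| <= #|Sg beta| by rewrite ea; apply: minm; apply/pbP; exists beta.
  move: le; rewrite (card_pgroup (pgroupS (SgG alpha) pG)) (card_pgroup (pgroupS (SgG beta) pG)).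
  set a := logn _ _; set b := logn _ _.
  by rewrite leq_exp2l ?prime_gt1 // => /dvdn_exp2l.
have triv : forall g, g \in Sg alpha -> g = 1.
  move=> g gS; have gG : g \in G by apply: (subsetP (SgG alpha)).
  apply: finj => //; apply: functional_extensionality => x.
  rewrite f1; have := subsetP (sub x) g gS; rewrite inE => /andP[_ /pbP] //.
move=> g h gG hG e.
have : g * h^-1 \in Sg alpha.
  rewrite inE groupM ?groupV //=; apply/pbP.
  rewrite fM ?groupV //= e.
  by have := congr1 (fun F => F alpha) (fM hG (groupVr hG)); rewrite mulgV f1 /= => <-.
move/triv => /eqP; rewrite -eq_mulgV1 => /eqP //.
Qed.
End Cyc.

Section NC.
Variables (gT : finGroupType) (G : {group gT}) (p : nat) (a b : gT).
Hypotheses (pr : prime p) (cG : abelian G) (aG : a \in G) (bG : b \in G)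
  (oa : #[a] = p) (ob : #[b] = p) (bna : b \notin <[a]>).

Lemma ab_comm : commute a b.
Proof. exact: (centsP cG) a aG b bG. Qed.

Lemma a_notin_ab : a \notin <[a * b]>.
Proof.
apply/negP => aab.
have ord : #[a * b] <= p.
  apply: dvdn_leq; first exact: prime_gt0.
  rewrite order_dvdn expgMn; last exact: ab_comm.
  have -> : a ^+ p = 1 by rewrite -oa expg_order.
  have -> : b ^+ p = 1 by rewrite -ob expg_order.
  by rewrite mulg1.
have e : <[a]> == <[a * b]>.
  by rewrite eqEcard cycle_subG aab /= -!orderE oa.
have bab : b \in <[a * b]>.
  have h : a^-1 * (a * b) \in <[a * b]> by rewrite groupM ?groupV ?cycle_id.
  by rewrite mulKg in h.
by move: bna; rewrite (eqP e) bab.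
Qed.

Lemma ab_TI x : x \in <[a]> -> x \in <[b]> -> x = 1.
Proof.
move=> xa xb.
have : x \in <[b]> :&: <[a]> by rewrite inE xa xb.
rewrite prime_TIg ?inE; first by move/eqP.
  by rewrite -orderE ob.
by rewrite cycle_subG.
Qed.

Let K1 := <[a]>%G.
Let K2 := <[b]>%G.
Let K3 := <[a * b]>%G.

Lemma normK1 : G \subset 'N(K1).
Proof. by apply: sub_abelian_norm; rewrite // cycle_subG. Qed.
Lemma normK2 : G \subset 'N(K2).
Proof. by apply: sub_abelian_norm; rewrite // cycle_subG. Qed.
Lemma normK3 : G \subset 'N(K3).
Proof. by apply: sub_abelian_norm; rewrite // cycle_subG groupM. Qed.

Definition Om := (coset_of K1 + (coset_of K2 + coset_of K3))%type.

Definition act (x : gT) (w : Om) : Om :=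
  match w with
  | inl c => inl (c * coset K1 x)
  | inr (inl c) => inr (inl (c * coset K2 x))
  | inr (inr c) => inr (inr (c * coset K3 x))
  end.

Definition th (w : Om) : Om :=
  match w with
  | inl c => inl c
  | inr (inl c) => inr (inl c)
  | inr (inr c) => inr (inr (c * coset K3 a))
  end.

Lemma coset_eq_in (K : {group gT}) x y : x \in 'N(K) -> y \in 'N(K) ->
  coset K x = coset K y -> x * y^-1 \in K.
Proof.
move=> xN yN e; apply: coset_idr; first by rewrite groupM ?groupV.
rewrite morphM ?groupV // morphV //; change (coset K x * (coset K y)^-1 = 1); by rewrite e mulgV.
Qed.

Lemma act_bij x : bijective (act x).
Proof.
exists (fun w => match w with
  | inl c => inl (c * (coset K1 x)^-1)
  | inr (inl c) => inr (inl (c * (coset K2 x)^-1))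
  | inr (inr c) => inr (inr (c * (coset K3 x)^-1))
  end) => [[c|[c|c]]|[c|[c|c]]] /=; by rewrite ?mulgK ?mulgKV.
Qed.

Lemma th_bij : bijective th.
Proof.
exists (fun w => match w with
  | inl c => inl c
  | inr (inl c) => inr (inl c)
  | inr (inr c) => inr (inr (c * (coset K3 a)^-1))
  end) => [[c|[c|c]]|[c|[c|c]]] /=; by rewrite ?mulgK ?mulgKV.
Qed.

Lemma actM x y : x \in G -> y \in G -> act (x * y) = act y \o act x.
Proof.
move=> xG yG; apply: functional_extensionality => -[c|[c|c]] /=;
  by rewrite morphM ?mulgA // ?(subsetP normK1) ?(subsetP normK2) ?(subsetP normK3).
Qed.

Lemma act_inj x y : x \in G -> y \in G -> act x = act y -> x = y.
Proof.
move=> xG yG e.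
pose q1 (w : Om) : coset_of K1 := if w is inl c then c else 1.
pose q2 (w : Om) : coset_of K2 := if w is inr (inl c) then c else 1.
have e1 := congr1 (fun F => q1 (F (inl 1))) e.
have e2 := congr1 (fun F => q2 (F (inr (inl 1)))) e.
change (1 * coset K1 x = 1 * coset K1 y) in e1.
change (1 * coset K2 x = 1 * coset K2 y) in e2.
rewrite !mul1g in e1 e2.
apply/eqP; rewrite eq_mulgV1; apply/eqP; apply: ab_TI.
  by apply: coset_eq_in e1; rewrite ?(subsetP normK1).
by apply: coset_eq_in e2; rewrite ?(subsetP normK2).
Qed.

Definition Hp (t : Om -> Om) : Prop := exists2 g, g \in G & t = act g.

Lemma Hp_iso : perm_group_isomorphic_to G Hp.
Proof.
exists act; split => //.
- move=> g _; exact: act_bij.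
- exact: actM.
- exact: act_inj.
Qed.

Lemma th_not : ~ Hp th.
Proof.
case=> x xG e.
pose q1 (w : Om) : coset_of K1 := if w is inl c then c else 1.
pose q2 (w : Om) : coset_of K2 := if w is inr (inl c) then c else 1.
pose q3 (w : Om) : coset_of K3 := if w is inr (inr c) then c else 1.
have e1 := congr1 (fun F => q1 (F (inl 1))) e.
have e2 := congr1 (fun F => q2 (F (inr (inl 1)))) e.
have e3 := congr1 (fun F => q3 (F (inr (inr 1)))) e.
change (1 = 1 * coset K1 x) in e1.
change (1 = 1 * coset K2 x) in e2.
change (1 * coset K3 a = 1 * coset K3 x) in e3.
rewrite !mul1g in e1 e2 e3.
have x1 : x = 1.
  by apply: ab_TI; apply: coset_idr; rewrite ?(subsetP normK1) ?(subsetP normK2).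
have : a \in K3.
  apply: coset_idr; first by rewrite (subsetP normK3).
  by rewrite e3 x1 morph1.
by rewrite (negPf a_notin_ab).
Qed.

Lemma th_clos : two_closure Hp th.
Proof.
split; first exact: th_bij.
have K1a : coset K1 a = 1 by rewrite coset_id // cycle_id.
have K2b : coset K2 b^-1 = 1 by rewrite coset_id // groupV cycle_id.
have K3b : coset K3 b^-1 = coset K3 a.
  have h : coset K3 (a * b * b^-1) = coset K3 b^-1 by rewrite coset_kerl // cycle_id.
  by rewrite mulgK in h.
have c1 : forall K : {group gT}, coset K 1 = 1 by move=> K; rewrite morph1.
move=> [c|[c|c]] [d|[d|d]].
all: first
  [ exists (act 1); split; [by exists 1 | by split; rewrite /act /th ?c1 ?mulg1]
  | exists (act a); split; [by exists a | by split; rewrite /act /th ?K1a ?mulg1]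
  | exists (act b^-1); split; [by exists b^-1; rewrite ?groupV | by split; rewrite /act /th ?K2b ?K3b ?mulg1] ].
Qed.

End NC.

Lemma noncyc_elts (gT : finGroupType) (G : {group gT}) (p : nat) :
  prime p -> p.-group G -> abelian G -> ~~ cyclic G ->
  exists a b, [/\ a \in G, b \in G, #[a] = p, #[b] = p & b \notin <[a]>].
Proof.
move=> pr pG cG ncyc.
have : 2 <= 'r_p(G) by rewrite -(rank_pgroup pG) ltnNge -abelian_rank1_cyclic.
case/p_rank_geP => E /pnElemPcard [sEG abE cE].
have E1 : E :!=: 1.
  apply/eqP => E1; move: cE; rewrite E1 cards1 => /esym/eqP.
  by rewrite -(expn0 p) eqn_exp2l ?prime_gt1.
case/trivgPn: E1 => a aE a1.
have oa : #[a] = p by apply: (abelem_order_p abE).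
have : ~~ (E \subset <[a]>).
  apply/negP => /subset_leq_card; rewrite cE -orderE oa.
  move=> h; have := leq_exp2l 2 1 (prime_gt1 pr); rewrite expn1 h => /esym. done.
case/subsetPn => b bE bna.
have b1 : b != 1 by apply: contraNneq bna => ->; rewrite group1.
exists a, b; split => //; try exact: (subsetP sEG).
exact: (abelem_order_p abE).
Qed.

Theorem mainTheorem8 (gT : finGroupType) (G : {group gT}) (p : nat) :
  prime p -> p.-group G -> abelian G ->
  (two_closed_group G <-> cyclic G).
Proof.
move=> pr pG cG; split.
  move=> clos; apply: contraT => ncyc; exfalso.
  have [a [b [aG bG oa ob bna]]] := noncyc_elts pr pG cG ncyc.
  have h := (clos _ _ (Hp_iso pr cG aG bG ob bna) (@th _ a b)).2.
  apply: (th_not pr cG aG bG oa ob bna); apply: h.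
  exact: th_clos.
move=> cyc Omega H [f [fb fM fi fH]] theta; split.
  case/fH => g gG ->; split; first exact: fb.
  by move=> al be; exists (f g); split => //; apply/fH; exists g.
case=> _ cl; apply/fH.
case: (reg_point fb fM fi pr pG cyc) => [emp | [alpha reg]].
  exists 1; first exact: group1.
  by apply: functional_extensionality => x; case: (emp x).
have [g0 [Hg0 [e0 _]]] := cl alpha alpha.
case/fH: Hg0 => x0 x0G ex0; subst g0.
exists x0 => //; apply: functional_extensionality => be.
have [g [Hg [e1 e2]]] := cl alpha be.
case/fH: Hg => y yG ey; subst g.
have yx : y = x0 by apply: reg => //; rewrite -e1 -e0.
by rewrite e2 yx.
Qed.
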